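(* There are infinitely many $\mathbb{Q}$-rational points on $O$. More precisely, let $Q\subset\mathbf{P}^4$ be the quadric surface given by $l=q=0$, where $$l:=x_0+x_1+x_2-3x_3-3x_4,$$ $$q:=x_0^2+x_1^2+x_2^2+9x_3^2-x_0x_1-x_0x_2-3x_0x_3-x_1x_2-3x_1x_3-3x_2x_3.$$ Then the double covering $\pi:O\to\mathbf{P}^4_{\mathbb{Q}}$ splits over $Q$; in particular, there are one or two $\mathbb{Q}$-rational points of $O$ above each $\mathbb{Q}$-rational point of $Q$.
   Context: Let $$\Delta'(x_0,\ldots,x_4):=\prod_{i_1,\ldots,i_4\in\{0,1\}}\big(\sqrt{x_0}+(-1)^{i_1}\sqrt{x_1}+(-1)^{i_2}\sqrt{x_2}+(-1)^{i_3}\sqrt{x_3}+(-1)^{i_4}\sqrt{x_4}\big)\in\mathbb{Q}[x_0,\ldots,x_4]$$ (symmetric, degree $8$). $O$ is the double covering $\pi:O\to\mathbf{P}^4_{\mathbb{Q}}$ given by $w^2=(-3)\Delta'(x_0,\ldots,x_4)$ (a hypersurface in $\mathbf{P}(4,1,1,1,1,1)$). ''Splits over $Q$'' means that $\pi^{-1}(Q)\to Q$ is a trivial double covering, i.e. $(-3)\Delta'$ restricted to $Q$ is a square. *)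

(* Defs.v *)
From HB Require Import structures.
From mathcomp Require Import all_boot all_order all_algebra.
From mathcomp Require Import mpoly.
Set Implicit Arguments.
Unset Strict Implicit.
Unset Printing Implicit Defensive.
Import Order.TTheory GRing.Theory Num.Theory.
Local Open Scope ring_scope.

Notation poly5 := {mpoly rat[5]}.

Definition xv (i : nat) : poly5 := 'X_(inord i).

(* Formal version of the product defining Delta': the variable y_i stands for
   sqrt(x_i).  Pprod(y) = prod_{s in {0,1}^4} (y_0 + sum_{k=1..4} (-1)^{s_k} y_k). *)
Definition Pprod : poly5 :=
  \prod_(s : {ffun 'I_4 -> bool})
     ('X_ord0 + \sum_(k < 4) (-1) ^+ (s k) * 'X_(lift ord0 k)).

(* Pprod is even in every variable (all exponents are even), and
   Delta'(x_0,...,x_4) = Pprod(sqrt x_0, ..., sqrt x_4); i.e. Delta' is obtained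
   from Pprod by halving every exponent. *)
Definition halfm (m : 'X_{1..5}) : 'X_{1..5} := [multinom (m i)./2 | i < 5].

Definition Delta' : poly5 :=
  \sum_(m <- msupp Pprod) Pprod@_m *: 'X_[halfm m].

Definition Fbranch : poly5 := (-3) *: Delta'.

Definition lQ : poly5 := xv 0 + xv 1 + xv 2 - 3 *: xv 3 - 3 *: xv 4.

Definition qQ : poly5 :=
  xv 0 ^+ 2 + xv 1 ^+ 2 + xv 2 ^+ 2 + 9 *: xv 3 ^+ 2
  - xv 0 * xv 1 - xv 0 * xv 2 - 3 *: (xv 0 * xv 3)
  - xv 1 * xv 2 - 3 *: (xv 1 * xv 3) - 3 *: (xv 2 * xv 3).

(* Q-rational points of O in the weighted projective space P(4,1,1,1,1,1):
   represented by (w, x) with x <> 0 and w^2 = (-3) Delta'(x). *)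
Definition on_O (p : rat * ('I_5 -> rat)) : Prop :=
  (exists i, p.2 i != 0) /\ p.1 ^+ 2 = Fbranch.@[p.2].

(* Equality of points of P(4,1,1,1,1,1): (w,x) ~ (lambda^4 w, lambda x). *)
Definition wequiv (p p' : rat * ('I_5 -> rat)) : Prop :=
  exists2 c : rat, c != 0 &
    p'.1 = c ^+ 4 * p.1 /\ forall i, p'.2 i = c * p.2 i.

(* Main.v *)
Require Import Defs.
From HB Require Import structures.
From mathcomp Require Import all_boot all_order all_algebra.
From mathcomp Require Import mpoly.
From mathcomp Require Import ring.
Import GRing.Theory Num.Theory.
Local Open Scope ring_scope.
Definition Dlist : seq (bool * (nat*nat) * (nat*nat*nat*nat*nat)) :=
  [:: (false, (0, 1), (0,0,0,0,8));
     (true, (0, 8), (0,0,0,1,7));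
     (false, (0, 28), (0,0,0,2,6));
     (true, (0, 56), (0,0,0,3,5));
     (false, (0, 70), (0,0,0,4,4));
     (true, (0, 56), (0,0,0,5,3));
     (false, (0, 28), (0,0,0,6,2));
     (true, (0, 8), (0,0,0,7,1));
     (false, (0, 1), (0,0,0,8,0));
     (true, (0, 8), (0,0,1,0,7));
     (false, (0, 40), (0,0,1,1,6));
     (true, (0, 72), (0,0,1,2,5));
     (false, (0, 40), (0,0,1,3,4));
     (false, (0, 40), (0,0,1,4,3));
     (true, (0, 72), (0,0,1,5,2));
     (false, (0, 40), (0,0,1,6,1));
     (true, (0, 8), (0,0,1,7,0));
     (false, (0, 28), (0,0,2,0,6));
     (true, (0, 72), (0,0,2,1,5));
     (false, (0, 36), (0,0,2,2,4));
     (false, (0, 16), (0,0,2,3,3));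
     (false, (0, 36), (0,0,2,4,2));
     (true, (0, 72), (0,0,2,5,1));
     (false, (0, 28), (0,0,2,6,0));
     (true, (0, 56), (0,0,3,0,5));
     (false, (0, 40), (0,0,3,1,4));
     (false, (0, 16), (0,0,3,2,3));
     (false, (0, 16), (0,0,3,3,2));
     (false, (0, 40), (0,0,3,4,1));
     (true, (0, 56), (0,0,3,5,0));
     (false, (0, 70), (0,0,4,0,4));
     (false, (0, 40), (0,0,4,1,3));
     (false, (0, 36), (0,0,4,2,2));
     (false, (0, 40), (0,0,4,3,1));
     (false, (0, 70), (0,0,4,4,0));
     (true, (0, 56), (0,0,5,0,3));
     (true, (0, 72), (0,0,5,1,2));
     (true, (0, 72), (0,0,5,2,1));
     (true, (0, 56), (0,0,5,3,0));
     (false, (0, 28), (0,0,6,0,2));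
     (false, (0, 40), (0,0,6,1,1));
     (false, (0, 28), (0,0,6,2,0));
     (true, (0, 8), (0,0,7,0,1));
     (true, (0, 8), (0,0,7,1,0));
     (false, (0, 1), (0,0,8,0,0));
     (true, (0, 8), (0,1,0,0,7));
     (false, (0, 40), (0,1,0,1,6));
     (true, (0, 72), (0,1,0,2,5));
     (false, (0, 40), (0,1,0,3,4));
     (false, (0, 40), (0,1,0,4,3));
     (true, (0, 72), (0,1,0,5,2));
     (false, (0, 40), (0,1,0,6,1));
     (true, (0, 8), (0,1,0,7,0));
     (false, (0, 40), (0,1,1,0,6));
     (true, (0, 176), (0,1,1,1,5));
     (false, (0, 344), (0,1,1,2,4));
     (true, (0, 416), (0,1,1,3,3));
     (false, (0, 344), (0,1,1,4,2));
     (true, (0, 176), (0,1,1,5,1));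
     (false, (0, 40), (0,1,1,6,0));
     (true, (0, 72), (0,1,2,0,5));
     (false, (0, 344), (0,1,2,1,4));
     (true, (0, 272), (0,1,2,2,3));
     (true, (0, 272), (0,1,2,3,2));
     (false, (0, 344), (0,1,2,4,1));
     (true, (0, 72), (0,1,2,5,0));
     (false, (0, 40), (0,1,3,0,4));
     (true, (0, 416), (0,1,3,1,3));
     (true, (0, 272), (0,1,3,2,2));
     (true, (0, 416), (0,1,3,3,1));
     (false, (0, 40), (0,1,3,4,0));
     (false, (0, 40), (0,1,4,0,3));
     (false, (0, 344), (0,1,4,1,2));
     (false, (0, 344), (0,1,4,2,1));
     (false, (0, 40), (0,1,4,3,0));
     (true, (0, 72), (0,1,5,0,2));
     (true, (0, 176), (0,1,5,1,1));
     (true, (0, 72), (0,1,5,2,0));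
     (false, (0, 40), (0,1,6,0,1));
     (false, (0, 40), (0,1,6,1,0));
     (true, (0, 8), (0,1,7,0,0));
     (false, (0, 28), (0,2,0,0,6));
     (true, (0, 72), (0,2,0,1,5));
     (false, (0, 36), (0,2,0,2,4));
     (false, (0, 16), (0,2,0,3,3));
     (false, (0, 36), (0,2,0,4,2));
     (true, (0, 72), (0,2,0,5,1));
     (false, (0, 28), (0,2,0,6,0));
     (true, (0, 72), (0,2,1,0,5));
     (false, (0, 344), (0,2,1,1,4));
     (true, (0, 272), (0,2,1,2,3));
     (true, (0, 272), (0,2,1,3,2));
     (false, (0, 344), (0,2,1,4,1));
     (true, (0, 72), (0,2,1,5,0));
     (false, (0, 36), (0,2,2,0,4));
     (true, (0, 272), (0,2,2,1,3));
     (false, (2, 8), (0,2,2,2,2));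
     (true, (0, 272), (0,2,2,3,1));
     (false, (0, 36), (0,2,2,4,0));
     (false, (0, 16), (0,2,3,0,3));
     (true, (0, 272), (0,2,3,1,2));
     (true, (0, 272), (0,2,3,2,1));
     (false, (0, 16), (0,2,3,3,0));
     (false, (0, 36), (0,2,4,0,2));
     (false, (0, 344), (0,2,4,1,1));
     (false, (0, 36), (0,2,4,2,0));
     (true, (0, 72), (0,2,5,0,1));
     (true, (0, 72), (0,2,5,1,0));
     (false, (0, 28), (0,2,6,0,0));
     (true, (0, 56), (0,3,0,0,5));
     (false, (0, 40), (0,3,0,1,4));
     (false, (0, 16), (0,3,0,2,3));
     (false, (0, 16), (0,3,0,3,2));
     (false, (0, 40), (0,3,0,4,1));
     (true, (0, 56), (0,3,0,5,0));
     (false, (0, 40), (0,3,1,0,4));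
     (true, (0, 416), (0,3,1,1,3));
     (true, (0, 272), (0,3,1,2,2));
     (true, (0, 416), (0,3,1,3,1));
     (false, (0, 40), (0,3,1,4,0));
     (false, (0, 16), (0,3,2,0,3));
     (true, (0, 272), (0,3,2,1,2));
     (true, (0, 272), (0,3,2,2,1));
     (false, (0, 16), (0,3,2,3,0));
     (false, (0, 16), (0,3,3,0,2));
     (true, (0, 416), (0,3,3,1,1));
     (false, (0, 16), (0,3,3,2,0));
     (false, (0, 40), (0,3,4,0,1));
     (false, (0, 40), (0,3,4,1,0));
     (true, (0, 56), (0,3,5,0,0));
     (false, (0, 70), (0,4,0,0,4));
     (false, (0, 40), (0,4,0,1,3));
     (false, (0, 36), (0,4,0,2,2));
     (false, (0, 40), (0,4,0,3,1));
     (false, (0, 70), (0,4,0,4,0));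
     (false, (0, 40), (0,4,1,0,3));
     (false, (0, 344), (0,4,1,1,2));
     (false, (0, 344), (0,4,1,2,1));
     (false, (0, 40), (0,4,1,3,0));
     (false, (0, 36), (0,4,2,0,2));
     (false, (0, 344), (0,4,2,1,1));
     (false, (0, 36), (0,4,2,2,0));
     (false, (0, 40), (0,4,3,0,1));
     (false, (0, 40), (0,4,3,1,0));
     (false, (0, 70), (0,4,4,0,0));
     (true, (0, 56), (0,5,0,0,3));
     (true, (0, 72), (0,5,0,1,2));
     (true, (0, 72), (0,5,0,2,1));
     (true, (0, 56), (0,5,0,3,0));
     (true, (0, 72), (0,5,1,0,2));
     (true, (0, 176), (0,5,1,1,1));
     (true, (0, 72), (0,5,1,2,0));
     (true, (0, 72), (0,5,2,0,1));
     (true, (0, 72), (0,5,2,1,0));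
     (true, (0, 56), (0,5,3,0,0));
     (false, (0, 28), (0,6,0,0,2));
     (false, (0, 40), (0,6,0,1,1));
     (false, (0, 28), (0,6,0,2,0));
     (false, (0, 40), (0,6,1,0,1));
     (false, (0, 40), (0,6,1,1,0));
     (false, (0, 28), (0,6,2,0,0));
     (true, (0, 8), (0,7,0,0,1));
     (true, (0, 8), (0,7,0,1,0));
     (true, (0, 8), (0,7,1,0,0));
     (false, (0, 1), (0,8,0,0,0));
     (true, (0, 8), (1,0,0,0,7));
     (false, (0, 40), (1,0,0,1,6));
     (true, (0, 72), (1,0,0,2,5));
     (false, (0, 40), (1,0,0,3,4));
     (false, (0, 40), (1,0,0,4,3));
     (true, (0, 72), (1,0,0,5,2));
     (false, (0, 40), (1,0,0,6,1));
     (true, (0, 8), (1,0,0,7,0));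
     (false, (0, 40), (1,0,1,0,6));
     (true, (0, 176), (1,0,1,1,5));
     (false, (0, 344), (1,0,1,2,4));
     (true, (0, 416), (1,0,1,3,3));
     (false, (0, 344), (1,0,1,4,2));
     (true, (0, 176), (1,0,1,5,1));
     (false, (0, 40), (1,0,1,6,0));
     (true, (0, 72), (1,0,2,0,5));
     (false, (0, 344), (1,0,2,1,4));
     (true, (0, 272), (1,0,2,2,3));
     (true, (0, 272), (1,0,2,3,2));
     (false, (0, 344), (1,0,2,4,1));
     (true, (0, 72), (1,0,2,5,0));
     (false, (0, 40), (1,0,3,0,4));
     (true, (0, 416), (1,0,3,1,3));
     (true, (0, 272), (1,0,3,2,2));
     (true, (0, 416), (1,0,3,3,1));
     (false, (0, 40), (1,0,3,4,0));
     (false, (0, 40), (1,0,4,0,3));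
     (false, (0, 344), (1,0,4,1,2));
     (false, (0, 344), (1,0,4,2,1));
     (false, (0, 40), (1,0,4,3,0));
     (true, (0, 72), (1,0,5,0,2));
     (true, (0, 176), (1,0,5,1,1));
     (true, (0, 72), (1,0,5,2,0));
     (false, (0, 40), (1,0,6,0,1));
     (false, (0, 40), (1,0,6,1,0));
     (true, (0, 8), (1,0,7,0,0));
     (false, (0, 40), (1,1,0,0,6));
     (true, (0, 176), (1,1,0,1,5));
     (false, (0, 344), (1,1,0,2,4));
     (true, (0, 416), (1,1,0,3,3));
     (false, (0, 344), (1,1,0,4,2));
     (true, (0, 176), (1,1,0,5,1));
     (false, (0, 40), (1,1,0,6,0));
     (true, (0, 176), (1,1,1,0,5));
     (true, (0, 752), (1,1,1,1,4));
     (false, (0, 928), (1,1,1,2,3));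
     (false, (0, 928), (1,1,1,3,2));
     (true, (0, 752), (1,1,1,4,1));
     (true, (0, 176), (1,1,1,5,0));
     (false, (0, 344), (1,1,2,0,4));
     (false, (0, 928), (1,1,2,1,3));
     (true, (1, 520), (1,1,2,2,2));
     (false, (0, 928), (1,1,2,3,1));
     (false, (0, 344), (1,1,2,4,0));
     (true, (0, 416), (1,1,3,0,3));
     (false, (0, 928), (1,1,3,1,2));
     (false, (0, 928), (1,1,3,2,1));
     (true, (0, 416), (1,1,3,3,0));
     (false, (0, 344), (1,1,4,0,2));
     (true, (0, 752), (1,1,4,1,1));
     (false, (0, 344), (1,1,4,2,0));
     (true, (0, 176), (1,1,5,0,1));
     (true, (0, 176), (1,1,5,1,0));
     (false, (0, 40), (1,1,6,0,0));
     (true, (0, 72), (1,2,0,0,5));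
     (false, (0, 344), (1,2,0,1,4));
     (true, (0, 272), (1,2,0,2,3));
     (true, (0, 272), (1,2,0,3,2));
     (false, (0, 344), (1,2,0,4,1));
     (true, (0, 72), (1,2,0,5,0));
     (false, (0, 344), (1,2,1,0,4));
     (false, (0, 928), (1,2,1,1,3));
     (true, (1, 520), (1,2,1,2,2));
     (false, (0, 928), (1,2,1,3,1));
     (false, (0, 344), (1,2,1,4,0));
     (true, (0, 272), (1,2,2,0,3));
     (true, (1, 520), (1,2,2,1,2));
     (true, (1, 520), (1,2,2,2,1));
     (true, (0, 272), (1,2,2,3,0));
     (true, (0, 272), (1,2,3,0,2));
     (false, (0, 928), (1,2,3,1,1));
     (true, (0, 272), (1,2,3,2,0));
     (false, (0, 344), (1,2,4,0,1));
     (false, (0, 344), (1,2,4,1,0));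
     (true, (0, 72), (1,2,5,0,0));
     (false, (0, 40), (1,3,0,0,4));
     (true, (0, 416), (1,3,0,1,3));
     (true, (0, 272), (1,3,0,2,2));
     (true, (0, 416), (1,3,0,3,1));
     (false, (0, 40), (1,3,0,4,0));
     (true, (0, 416), (1,3,1,0,3));
     (false, (0, 928), (1,3,1,1,2));
     (false, (0, 928), (1,3,1,2,1));
     (true, (0, 416), (1,3,1,3,0));
     (true, (0, 272), (1,3,2,0,2));
     (false, (0, 928), (1,3,2,1,1));
     (true, (0, 272), (1,3,2,2,0));
     (true, (0, 416), (1,3,3,0,1));
     (true, (0, 416), (1,3,3,1,0));
     (false, (0, 40), (1,3,4,0,0));
     (false, (0, 40), (1,4,0,0,3));
     (false, (0, 344), (1,4,0,1,2));
     (false, (0, 344), (1,4,0,2,1));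
     (false, (0, 40), (1,4,0,3,0));
     (false, (0, 344), (1,4,1,0,2));
     (true, (0, 752), (1,4,1,1,1));
     (false, (0, 344), (1,4,1,2,0));
     (false, (0, 344), (1,4,2,0,1));
     (false, (0, 344), (1,4,2,1,0));
     (false, (0, 40), (1,4,3,0,0));
     (true, (0, 72), (1,5,0,0,2));
     (true, (0, 176), (1,5,0,1,1));
     (true, (0, 72), (1,5,0,2,0));
     (true, (0, 176), (1,5,1,0,1));
     (true, (0, 176), (1,5,1,1,0));
     (true, (0, 72), (1,5,2,0,0));
     (false, (0, 40), (1,6,0,0,1));
     (false, (0, 40), (1,6,0,1,0));
     (false, (0, 40), (1,6,1,0,0));
     (true, (0, 8), (1,7,0,0,0));
     (false, (0, 28), (2,0,0,0,6));
     (true, (0, 72), (2,0,0,1,5));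
     (false, (0, 36), (2,0,0,2,4));
     (false, (0, 16), (2,0,0,3,3));
     (false, (0, 36), (2,0,0,4,2));
     (true, (0, 72), (2,0,0,5,1));
     (false, (0, 28), (2,0,0,6,0));
     (true, (0, 72), (2,0,1,0,5));
     (false, (0, 344), (2,0,1,1,4));
     (true, (0, 272), (2,0,1,2,3));
     (true, (0, 272), (2,0,1,3,2));
     (false, (0, 344), (2,0,1,4,1));
     (true, (0, 72), (2,0,1,5,0));
     (false, (0, 36), (2,0,2,0,4));
     (true, (0, 272), (2,0,2,1,3));
     (false, (2, 8), (2,0,2,2,2));
     (true, (0, 272), (2,0,2,3,1));
     (false, (0, 36), (2,0,2,4,0));
     (false, (0, 16), (2,0,3,0,3));
     (true, (0, 272), (2,0,3,1,2));
     (true, (0, 272), (2,0,3,2,1));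
     (false, (0, 16), (2,0,3,3,0));
     (false, (0, 36), (2,0,4,0,2));
     (false, (0, 344), (2,0,4,1,1));
     (false, (0, 36), (2,0,4,2,0));
     (true, (0, 72), (2,0,5,0,1));
     (true, (0, 72), (2,0,5,1,0));
     (false, (0, 28), (2,0,6,0,0));
     (true, (0, 72), (2,1,0,0,5));
     (false, (0, 344), (2,1,0,1,4));
     (true, (0, 272), (2,1,0,2,3));
     (true, (0, 272), (2,1,0,3,2));
     (false, (0, 344), (2,1,0,4,1));
     (true, (0, 72), (2,1,0,5,0));
     (false, (0, 344), (2,1,1,0,4));
     (false, (0, 928), (2,1,1,1,3));
     (true, (1, 520), (2,1,1,2,2));
     (false, (0, 928), (2,1,1,3,1));
     (false, (0, 344), (2,1,1,4,0));
     (true, (0, 272), (2,1,2,0,3));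
     (true, (1, 520), (2,1,2,1,2));
     (true, (1, 520), (2,1,2,2,1));
     (true, (0, 272), (2,1,2,3,0));
     (true, (0, 272), (2,1,3,0,2));
     (false, (0, 928), (2,1,3,1,1));
     (true, (0, 272), (2,1,3,2,0));
     (false, (0, 344), (2,1,4,0,1));
     (false, (0, 344), (2,1,4,1,0));
     (true, (0, 72), (2,1,5,0,0));
     (false, (0, 36), (2,2,0,0,4));
     (true, (0, 272), (2,2,0,1,3));
     (false, (2, 8), (2,2,0,2,2));
     (true, (0, 272), (2,2,0,3,1));
     (false, (0, 36), (2,2,0,4,0));
     (true, (0, 272), (2,2,1,0,3));
     (true, (1, 520), (2,2,1,1,2));
     (true, (1, 520), (2,2,1,2,1));
     (true, (0, 272), (2,2,1,3,0));
     (false, (2, 8), (2,2,2,0,2));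
     (true, (1, 520), (2,2,2,1,1));
     (false, (2, 8), (2,2,2,2,0));
     (true, (0, 272), (2,2,3,0,1));
     (true, (0, 272), (2,2,3,1,0));
     (false, (0, 36), (2,2,4,0,0));
     (false, (0, 16), (2,3,0,0,3));
     (true, (0, 272), (2,3,0,1,2));
     (true, (0, 272), (2,3,0,2,1));
     (false, (0, 16), (2,3,0,3,0));
     (true, (0, 272), (2,3,1,0,2));
     (false, (0, 928), (2,3,1,1,1));
     (true, (0, 272), (2,3,1,2,0));
     (true, (0, 272), (2,3,2,0,1));
     (true, (0, 272), (2,3,2,1,0));
     (false, (0, 16), (2,3,3,0,0));
     (false, (0, 36), (2,4,0,0,2));
     (false, (0, 344), (2,4,0,1,1));
     (false, (0, 36), (2,4,0,2,0));
     (false, (0, 344), (2,4,1,0,1));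
     (false, (0, 344), (2,4,1,1,0));
     (false, (0, 36), (2,4,2,0,0));
     (true, (0, 72), (2,5,0,0,1));
     (true, (0, 72), (2,5,0,1,0));
     (true, (0, 72), (2,5,1,0,0));
     (false, (0, 28), (2,6,0,0,0));
     (true, (0, 56), (3,0,0,0,5));
     (false, (0, 40), (3,0,0,1,4));
     (false, (0, 16), (3,0,0,2,3));
     (false, (0, 16), (3,0,0,3,2));
     (false, (0, 40), (3,0,0,4,1));
     (true, (0, 56), (3,0,0,5,0));
     (false, (0, 40), (3,0,1,0,4));
     (true, (0, 416), (3,0,1,1,3));
     (true, (0, 272), (3,0,1,2,2));
     (true, (0, 416), (3,0,1,3,1));
     (false, (0, 40), (3,0,1,4,0));
     (false, (0, 16), (3,0,2,0,3));
     (true, (0, 272), (3,0,2,1,2));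
     (true, (0, 272), (3,0,2,2,1));
     (false, (0, 16), (3,0,2,3,0));
     (false, (0, 16), (3,0,3,0,2));
     (true, (0, 416), (3,0,3,1,1));
     (false, (0, 16), (3,0,3,2,0));
     (false, (0, 40), (3,0,4,0,1));
     (false, (0, 40), (3,0,4,1,0));
     (true, (0, 56), (3,0,5,0,0));
     (false, (0, 40), (3,1,0,0,4));
     (true, (0, 416), (3,1,0,1,3));
     (true, (0, 272), (3,1,0,2,2));
     (true, (0, 416), (3,1,0,3,1));
     (false, (0, 40), (3,1,0,4,0));
     (true, (0, 416), (3,1,1,0,3));
     (false, (0, 928), (3,1,1,1,2));
     (false, (0, 928), (3,1,1,2,1));
     (true, (0, 416), (3,1,1,3,0));
     (true, (0, 272), (3,1,2,0,2));
     (false, (0, 928), (3,1,2,1,1));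
     (true, (0, 272), (3,1,2,2,0));
     (true, (0, 416), (3,1,3,0,1));
     (true, (0, 416), (3,1,3,1,0));
     (false, (0, 40), (3,1,4,0,0));
     (false, (0, 16), (3,2,0,0,3));
     (true, (0, 272), (3,2,0,1,2));
     (true, (0, 272), (3,2,0,2,1));
     (false, (0, 16), (3,2,0,3,0));
     (true, (0, 272), (3,2,1,0,2));
     (false, (0, 928), (3,2,1,1,1));
     (true, (0, 272), (3,2,1,2,0));
     (true, (0, 272), (3,2,2,0,1));
     (true, (0, 272), (3,2,2,1,0));
     (false, (0, 16), (3,2,3,0,0));
     (false, (0, 16), (3,3,0,0,2));
     (true, (0, 416), (3,3,0,1,1));
     (false, (0, 16), (3,3,0,2,0));
     (true, (0, 416), (3,3,1,0,1));
     (true, (0, 416), (3,3,1,1,0));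
     (false, (0, 16), (3,3,2,0,0));
     (false, (0, 40), (3,4,0,0,1));
     (false, (0, 40), (3,4,0,1,0));
     (false, (0, 40), (3,4,1,0,0));
     (true, (0, 56), (3,5,0,0,0));
     (false, (0, 70), (4,0,0,0,4));
     (false, (0, 40), (4,0,0,1,3));
     (false, (0, 36), (4,0,0,2,2));
     (false, (0, 40), (4,0,0,3,1));
     (false, (0, 70), (4,0,0,4,0));
     (false, (0, 40), (4,0,1,0,3));
     (false, (0, 344), (4,0,1,1,2));
     (false, (0, 344), (4,0,1,2,1));
     (false, (0, 40), (4,0,1,3,0));
     (false, (0, 36), (4,0,2,0,2));
     (false, (0, 344), (4,0,2,1,1));
     (false, (0, 36), (4,0,2,2,0));
     (false, (0, 40), (4,0,3,0,1));
     (false, (0, 40), (4,0,3,1,0));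
     (false, (0, 70), (4,0,4,0,0));
     (false, (0, 40), (4,1,0,0,3));
     (false, (0, 344), (4,1,0,1,2));
     (false, (0, 344), (4,1,0,2,1));
     (false, (0, 40), (4,1,0,3,0));
     (false, (0, 344), (4,1,1,0,2));
     (true, (0, 752), (4,1,1,1,1));
     (false, (0, 344), (4,1,1,2,0));
     (false, (0, 344), (4,1,2,0,1));
     (false, (0, 344), (4,1,2,1,0));
     (false, (0, 40), (4,1,3,0,0));
     (false, (0, 36), (4,2,0,0,2));
     (false, (0, 344), (4,2,0,1,1));
     (false, (0, 36), (4,2,0,2,0));
     (false, (0, 344), (4,2,1,0,1));
     (false, (0, 344), (4,2,1,1,0));
     (false, (0, 36), (4,2,2,0,0));
     (false, (0, 40), (4,3,0,0,1));
     (false, (0, 40), (4,3,0,1,0));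
     (false, (0, 40), (4,3,1,0,0));
     (false, (0, 70), (4,4,0,0,0));
     (true, (0, 56), (5,0,0,0,3));
     (true, (0, 72), (5,0,0,1,2));
     (true, (0, 72), (5,0,0,2,1));
     (true, (0, 56), (5,0,0,3,0));
     (true, (0, 72), (5,0,1,0,2));
     (true, (0, 176), (5,0,1,1,1));
     (true, (0, 72), (5,0,1,2,0));
     (true, (0, 72), (5,0,2,0,1));
     (true, (0, 72), (5,0,2,1,0));
     (true, (0, 56), (5,0,3,0,0));
     (true, (0, 72), (5,1,0,0,2));
     (true, (0, 176), (5,1,0,1,1));
     (true, (0, 72), (5,1,0,2,0));
     (true, (0, 176), (5,1,1,0,1));
     (true, (0, 176), (5,1,1,1,0));
     (true, (0, 72), (5,1,2,0,0));
     (true, (0, 72), (5,2,0,0,1));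
     (true, (0, 72), (5,2,0,1,0));
     (true, (0, 72), (5,2,1,0,0));
     (true, (0, 56), (5,3,0,0,0));
     (false, (0, 28), (6,0,0,0,2));
     (false, (0, 40), (6,0,0,1,1));
     (false, (0, 28), (6,0,0,2,0));
     (false, (0, 40), (6,0,1,0,1));
     (false, (0, 40), (6,0,1,1,0));
     (false, (0, 28), (6,0,2,0,0));
     (false, (0, 40), (6,1,0,0,1));
     (false, (0, 40), (6,1,0,1,0));
     (false, (0, 40), (6,1,1,0,0));
     (false, (0, 28), (6,2,0,0,0));
     (true, (0, 8), (7,0,0,0,1));
     (true, (0, 8), (7,0,0,1,0));
     (true, (0, 8), (7,0,1,0,0));
     (true, (0, 8), (7,1,0,0,0));
     (false, (0, 1), (8,0,0,0,0))].
Definition gList : seq (bool * (nat*nat) * (nat*nat*nat*nat*nat)) :=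
  [:: (false, (0, 192), (0,0,0,0,4));
     (false, (0, 192), (0,0,0,1,3));
     (true, (0, 192), (0,0,0,3,1));
     (true, (0, 192), (0,0,0,4,0));
     (true, (0, 448), (0,0,1,0,3));
     (true, (0, 384), (0,0,1,1,2));
     (false, (0, 384), (0,0,1,2,1));
     (false, (0, 448), (0,0,1,3,0));
     (false, (0, 320), (0,0,2,0,2));
     (true, (0, 320), (0,0,2,2,0));
     (true, (0, 64), (0,0,3,0,1));
     (false, (0, 64), (0,0,3,1,0));
     (true, (0, 128), (0,1,0,0,3));
     (false, (0, 128), (0,1,0,3,0));
     (false, (0, 256), (0,1,1,0,2));
     (true, (0, 256), (0,1,1,2,0));
     (true, (0, 128), (0,1,2,0,1));
     (false, (0, 128), (0,1,2,1,0))].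
Definition aList : seq (bool * (nat*nat) * (nat*nat*nat*nat*nat)) :=
  [:: (false, (36, 867), (0,0,0,0,7));
     (false, (36, 837), (0,0,0,1,6));
     (true, (37, 521), (0,0,0,2,5));
     (true, (75, 543), (0,0,0,3,4));
     (true, (39, 447), (0,0,0,4,3));
     (false, (33, 903), (0,0,0,5,2));
     (false, (35, 301), (0,0,0,6,1));
     (true, (0, 765), (0,0,0,7,0));
     (true, (159, 767), (0,0,1,0,6));
     (true, (134, 778), (0,0,1,1,5));
     (false, (278, 727), (0,0,1,2,4));
     (false, (331, 348), (0,0,1,3,3));
     (true, (42, 297), (0,0,1,4,2));
     (true, (124, 26), (0,0,1,5,1));
     (true, (16, 151), (0,0,1,6,0));
     (false, (266, 231), (0,0,2,0,5));
     (false, (103, 347), (0,0,2,1,4));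
     (true, (589, 658), (0,0,2,2,3));
     (true, (414, 554), (0,0,2,3,2));
     (false, (79, 539), (0,0,2,4,1));
     (false, (54, 263), (0,0,2,5,0));
     (true, (206, 763), (0,0,3,0,4));
     (false, (83, 380), (0,0,3,1,3));
     (false, (499, 294), (0,0,3,2,2));
     (false, (160, 180), (0,0,3,3,1));
     (true, (44, 715), (0,0,3,4,0));
     (false, (67, 481), (0,0,4,0,3));
     (true, (127, 973), (0,0,4,1,2));
     (true, (171, 749), (0,0,4,2,1));
     (true, (9, 319), (0,0,4,3,0));
     (true, (0, 629), (0,0,5,0,2));
     (false, (50, 854), (0,0,5,1,1));
     (false, (20, 107), (0,0,5,2,0));
     (true, (4, 563), (0,0,6,0,1));
     (true, (6, 867), (0,0,6,1,0));
     (false, (0, 759), (0,0,7,0,0));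
     (true, (36, 887), (0,1,0,0,6));
     (false, (12, 678), (0,1,0,1,5));
     (false, (8, 391), (0,1,0,2,4));
     (false, (61, 12), (0,1,0,3,3));
     (false, (105, 159), (0,1,0,4,2));
     (true, (1, 146), (0,1,0,5,1));
     (true, (16, 151), (0,1,0,6,0));
     (false, (151, 742), (0,1,1,0,5));
     (true, (46, 794), (0,1,1,1,4));
     (true, (214, 100), (0,1,1,2,3));
     (true, (22, 868), (0,1,1,3,2));
     (false, (102, 966), (0,1,1,4,1));
     (false, (48, 62), (0,1,1,5,0));
     (true, (234, 993), (0,1,2,0,4));
     (false, (147, 100), (0,1,2,1,3));
     (false, (411, 898), (0,1,2,2,2));
     (false, (13, 468), (0,1,2,3,1));
     (true, (57, 585), (0,1,2,4,0));
     (false, (159, 812), (0,1,3,0,3));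
     (true, (198, 836), (0,1,3,1,2));
     (true, (201, 140), (0,1,3,2,1));
     (false, (42, 308), (0,1,3,3,0));
     (true, (37, 97), (0,1,4,0,2));
     (false, (86, 974), (0,1,4,1,1));
     (false, (6, 679), (0,1,4,2,0));
     (true, (0, 930), (0,1,5,0,1));
     (true, (7, 842), (0,1,5,1,0));
     (false, (0, 849), (0,1,6,0,0));
     (true, (0, 9), (0,2,0,0,5));
     (true, (7, 245), (0,2,0,1,4));
     (true, (16, 218), (0,2,0,2,3));
     (true, (246, 618), (0,2,0,3,2));
     (true, (203, 85), (0,2,0,4,1));
     (true, (27, 657), (0,2,0,5,0));
     (true, (1, 521), (0,2,1,0,4));
     (false, (44, 700), (0,2,1,1,3));
     (false, (39, 162), (0,2,1,2,2));
     (false, (132, 252), (0,2,1,3,1));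
     (false, (65, 295), (0,2,1,4,0));
     (false, (4, 470), (0,2,2,0,3));
     (true, (111, 678), (0,2,2,1,2));
     (true, (139, 326), (0,2,2,2,1));
     (true, (122, 250), (0,2,2,3,0));
     (true, (5, 10), (0,2,3,0,2));
     (false, (86, 460), (0,2,3,1,1));
     (false, (61, 806), (0,2,3,2,0));
     (true, (7, 101), (0,2,4,0,1));
     (true, (20, 925), (0,2,4,1,0));
     (false, (1, 971), (0,2,5,0,0));
     (false, (2, 133), (0,3,0,0,4));
     (false, (5, 556), (0,3,0,1,3));
     (false, (151, 134), (0,3,0,2,2));
     (false, (254, 388), (0,3,0,3,1));
     (false, (78, 165), (0,3,0,4,0));
     (true, (8, 124), (0,3,1,0,3));
     (false, (5, 964), (0,3,1,1,2));
     (true, (106, 932), (0,3,1,2,1));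
     (true, (88, 764), (0,3,1,3,0));
     (false, (19, 566), (0,3,2,0,2));
     (false, (37, 308), (0,3,2,1,1));
     (false, (86, 382), (0,3,2,2,0));
     (true, (3, 36), (0,3,3,0,1));
     (true, (19, 164), (0,3,3,1,0));
     (false, (1, 605), (0,3,4,0,0));
     (true, (2, 151), (0,4,0,0,3));
     (true, (46, 53), (0,4,0,1,2));
     (true, (126, 693), (0,4,0,2,1));
     (true, (66, 663), (0,4,0,3,0));
     (true, (4, 329), (0,4,1,0,2));
     (false, (21, 438), (0,4,1,1,1));
     (false, (39, 447), (0,4,1,2,0));
     (true, (7, 101), (0,4,2,0,1));
     (true, (20, 925), (0,4,2,1,0));
     (false, (1, 605), (0,4,3,0,0));
     (false, (7, 563), (0,5,0,0,2));
     (false, (34, 470), (0,5,0,1,1));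
     (false, (28, 299), (0,5,0,2,0));
     (true, (0, 930), (0,5,1,0,1));
     (true, (7, 842), (0,5,1,1,0));
     (false, (1, 971), (0,5,2,0,0));
     (true, (4, 563), (0,6,0,0,1));
     (true, (6, 867), (0,6,0,1,0));
     (false, (0, 849), (0,6,1,0,0));
     (false, (0, 759), (0,7,0,0,0));
     (false, (12, 265), (1,0,0,0,6));
     (false, (12, 678), (1,0,0,1,5));
     (true, (12, 345), (1,0,0,2,4));
     (true, (23, 468), (1,0,0,3,3));
     (true, (12, 345), (1,0,0,4,2));
     (false, (12, 678), (1,0,0,5,1));
     (false, (12, 265), (1,0,0,6,0));
     (true, (44, 866), (1,0,1,0,5));
     (true, (39, 882), (1,0,1,1,4));
     (false, (74, 668), (1,0,1,2,3));
     (false, (74, 668), (1,0,1,3,2));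
     (true, (39, 882), (1,0,1,4,1));
     (true, (44, 866), (1,0,1,5,0));
     (false, (57, 615), (1,0,2,0,4));
     (false, (18, 76), (1,0,2,1,3));
     (true, (93, 446), (1,0,2,2,2));
     (false, (18, 76), (1,0,2,3,1));
     (false, (57, 615), (1,0,2,4,0));
     (true, (26, 44), (1,0,3,0,3));
     (false, (30, 796), (1,0,3,1,2));
     (false, (30, 796), (1,0,3,2,1));
     (true, (26, 44), (1,0,3,3,0));
     (true, (4, 73), (1,0,4,0,2));
     (true, (28, 226), (1,0,4,1,1));
     (true, (4, 73), (1,0,4,2,0));
     (false, (6, 750), (1,0,5,0,1));
     (false, (6, 750), (1,0,5,1,0));
     (true, (1, 455), (1,0,6,0,0));
     (true, (3, 906), (1,1,0,0,5));
     (false, (9, 270), (1,1,0,1,4));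
     (true, (15, 444), (1,1,0,2,3));
     (true, (15, 444), (1,1,0,3,2));
     (false, (9, 270), (1,1,0,4,1));
     (true, (3, 906), (1,1,0,5,0));
     (false, (15, 534), (1,1,1,0,4));
     (true, (26, 952), (1,1,1,1,3));
     (true, (30, 252), (1,1,1,2,2));
     (true, (26, 952), (1,1,1,3,1));
     (false, (15, 534), (1,1,1,4,0));
     (true, (17, 844), (1,1,2,0,3));
     (false, (28, 644), (1,1,2,1,2));
     (false, (28, 644), (1,1,2,2,1));
     (true, (17, 844), (1,1,2,3,0));
     (true, (0, 324), (1,1,3,0,2));
     (true, (35, 592), (1,1,3,1,1));
     (true, (0, 324), (1,1,3,2,0));
     (false, (8, 790), (1,1,4,0,1));
     (false, (8, 790), (1,1,4,1,0));
     (true, (2, 826), (1,1,5,0,0));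
     (true, (3, 825), (1,2,0,0,4));
     (false, (13, 980), (1,2,0,1,3));
     (false, (37, 626), (1,2,0,2,2));
     (false, (13, 980), (1,2,0,3,1));
     (true, (3, 825), (1,2,0,4,0));
     (false, (19, 20), (1,2,1,0,3));
     (true, (8, 220), (1,2,1,1,2));
     (true, (8, 220), (1,2,1,2,1));
     (false, (19, 20), (1,2,1,3,0));
     (true, (26, 70), (1,2,2,0,2));
     (false, (11, 316), (1,2,2,1,1));
     (true, (26, 70), (1,2,2,2,0));
     (false, (15, 852), (1,2,3,0,1));
     (false, (15, 852), (1,2,3,1,0));
     (true, (5, 409), (1,2,4,0,0));
     (false, (2, 628), (1,3,0,0,3));
     (false, (2, 124), (1,3,0,1,2));
     (false, (2, 124), (1,3,0,2,1));
     (false, (2, 628), (1,3,0,3,0));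
     (true, (12, 612), (1,3,1,0,2));
     (true, (11, 16), (1,3,1,1,1));
     (true, (12, 612), (1,3,1,2,0));
     (false, (15, 852), (1,3,2,0,1));
     (false, (15, 852), (1,3,2,1,0));
     (true, (6, 540), (1,3,3,0,0));
     (true, (8, 169), (1,4,0,0,2));
     (true, (20, 34), (1,4,0,1,1));
     (true, (8, 169), (1,4,0,2,0));
     (false, (8, 790), (1,4,1,0,1));
     (false, (8, 790), (1,4,1,1,0));
     (true, (5, 409), (1,4,2,0,0));
     (false, (6, 750), (1,5,0,0,1));
     (false, (6, 750), (1,5,0,1,0));
     (true, (2, 826), (1,5,1,0,0));
     (true, (1, 455), (1,6,0,0,0));
     (true, (0, 9), (2,0,0,0,5));
     (true, (0, 333), (2,0,0,1,4));
     (true, (0, 90), (2,0,0,2,3));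
     (true, (0, 90), (2,0,0,3,2));
     (true, (0, 333), (2,0,0,4,1));
     (true, (0, 9), (2,0,0,5,0));
     (false, (0, 783), (2,0,1,0,4));
     (false, (3, 996), (2,0,1,1,3));
     (false, (1, 530), (2,0,1,2,2));
     (false, (3, 996), (2,0,1,3,1));
     (false, (0, 783), (2,0,1,4,0));
     (true, (3, 978), (2,0,2,0,3));
     (true, (15, 678), (2,0,2,1,2));
     (true, (15, 678), (2,0,2,2,1));
     (true, (3, 978), (2,0,2,3,0));
     (false, (8, 46), (2,0,3,0,2));
     (false, (22, 716), (2,0,3,1,1));
     (false, (8, 46), (2,0,3,2,0));
     (true, (7, 101), (2,0,4,0,1));
     (true, (7, 101), (2,0,4,1,0));
     (false, (1, 971), (2,0,5,0,0));
     (false, (0, 783), (2,1,0,0,4));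
     (false, (3, 996), (2,1,0,1,3));
     (false, (1, 530), (2,1,0,2,2));
     (false, (3, 996), (2,1,0,3,1));
     (false, (0, 783), (2,1,0,4,0));
     (true, (4, 788), (2,1,1,0,3));
     (false, (6, 372), (2,1,1,1,2));
     (false, (6, 372), (2,1,1,2,1));
     (true, (4, 788), (2,1,1,3,0));
     (false, (10, 26), (2,1,2,0,2));
     (true, (3, 276), (2,1,2,1,1));
     (false, (10, 26), (2,1,2,2,0));
     (true, (7, 956), (2,1,3,0,1));
     (true, (7, 956), (2,1,3,1,0));
     (false, (3, 807), (2,1,4,0,0));
     (true, (3, 978), (2,2,0,0,3));
     (true, (15, 678), (2,2,0,1,2));
     (true, (15, 678), (2,2,0,2,1));
     (true, (3, 978), (2,2,0,3,0));
     (false, (10, 26), (2,2,1,0,2));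
     (true, (3, 276), (2,2,1,1,1));
     (false, (10, 26), (2,2,1,2,0));
     (true, (10, 62), (2,2,2,0,1));
     (true, (10, 62), (2,2,2,1,0));
     (false, (5, 886), (2,2,3,0,0));
     (false, (8, 46), (2,3,0,0,2));
     (false, (22, 716), (2,3,0,1,1));
     (false, (8, 46), (2,3,0,2,0));
     (true, (7, 956), (2,3,1,0,1));
     (true, (7, 956), (2,3,1,1,0));
     (false, (5, 886), (2,3,2,0,0));
     (true, (7, 101), (2,4,0,0,1));
     (true, (7, 101), (2,4,0,1,0));
     (false, (3, 807), (2,4,1,0,0));
     (false, (1, 971), (2,5,0,0,0));
     (true, (0, 171), (3,0,0,0,4));
     (false, (0, 180), (3,0,0,1,3));
     (true, (0, 162), (3,0,0,2,2));
     (false, (0, 180), (3,0,0,3,1));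
     (true, (0, 171), (3,0,0,4,0));
     (false, (0, 324), (3,0,1,0,3));
     (true, (0, 180), (3,0,1,1,2));
     (true, (0, 180), (3,0,1,2,1));
     (false, (0, 324), (3,0,1,3,0));
     (true, (1, 170), (3,0,2,0,2));
     (true, (4, 932), (3,0,2,1,1));
     (true, (1, 170), (3,0,2,2,0));
     (false, (2, 340), (3,0,3,0,1));
     (false, (2, 340), (3,0,3,1,0));
     (true, (1, 467), (3,0,4,0,0));
     (false, (0, 324), (3,1,0,0,3));
     (true, (0, 180), (3,1,0,1,2));
     (true, (0, 180), (3,1,0,2,1));
     (false, (0, 324), (3,1,0,3,0));
     (true, (2, 628), (3,1,1,0,2));
     (false, (7, 416), (3,1,1,1,1));
     (true, (2, 628), (3,1,1,2,0));
     (false, (1, 260), (3,1,2,0,1));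
     (false, (1, 260), (3,1,2,1,0));
     (true, (2, 700), (3,1,3,0,0));
     (true, (1, 170), (3,2,0,0,2));
     (true, (4, 932), (3,2,0,1,1));
     (true, (1, 170), (3,2,0,2,0));
     (false, (1, 260), (3,2,1,0,1));
     (false, (1, 260), (3,2,1,1,0));
     (true, (3, 330), (3,2,2,0,0));
     (false, (2, 340), (3,3,0,0,1));
     (false, (2, 340), (3,3,0,1,0));
     (true, (2, 700), (3,3,1,0,0));
     (true, (1, 467), (3,4,0,0,0));
     (false, (0, 153), (4,0,0,0,3));
     (false, (0, 27), (4,0,0,1,2));
     (false, (0, 27), (4,0,0,2,1));
     (false, (0, 153), (4,0,0,3,0));
     (false, (0, 279), (4,0,1,0,2));
     (false, (0, 702), (4,0,1,1,1));
     (false, (0, 279), (4,0,1,2,0));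
     (true, (0, 189), (4,0,2,0,1));
     (true, (0, 189), (4,0,2,1,0));
     (false, (0, 837), (4,0,3,0,0));
     (false, (0, 279), (4,1,0,0,2));
     (false, (0, 702), (4,1,0,1,1));
     (false, (0, 279), (4,1,0,2,0));
     (false, (0, 342), (4,1,1,0,1));
     (false, (0, 342), (4,1,1,1,0));
     (false, (1, 503), (4,1,2,0,0));
     (true, (0, 189), (4,2,0,0,1));
     (true, (0, 189), (4,2,0,1,0));
     (false, (1, 503), (4,2,1,0,0));
     (false, (0, 837), (4,3,0,0,0));
     (true, (0, 117), (5,0,0,0,2));
     (true, (0, 90), (5,0,0,1,1));
     (true, (0, 117), (5,0,0,2,0));
     (true, (0, 162), (5,0,1,0,1));
     (true, (0, 162), (5,0,1,1,0));
     (true, (0, 333), (5,0,2,0,0));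
     (true, (0, 162), (5,1,0,0,1));
     (true, (0, 162), (5,1,0,1,0));
     (true, (0, 522), (5,1,1,0,0));
     (true, (0, 333), (5,2,0,0,0));
     (false, (0, 45), (6,0,0,0,1));
     (false, (0, 45), (6,0,0,1,0));
     (false, (0, 81), (6,0,1,0,0));
     (false, (0, 81), (6,1,0,0,0));
     (true, (0, 9), (7,0,0,0,0))].
Definition bList : seq (bool * (nat*nat) * (nat*nat*nat*nat*nat)) :=
  [:: (true, (12, 544), (0,0,0,0,6));
     (true, (13, 56), (0,0,0,1,5));
     (false, (10, 752), (0,0,0,2,4));
     (false, (22, 784), (0,0,0,3,3));
     (false, (10, 752), (0,0,0,4,2));
     (true, (13, 56), (0,0,0,5,1));
     (true, (12, 544), (0,0,0,6,0));
     (false, (47, 872), (0,0,1,0,5));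
     (false, (51, 456), (0,0,1,1,4));
     (true, (55, 552), (0,0,1,2,3));
     (true, (55, 552), (0,0,1,3,2));
     (false, (51, 456), (0,0,1,4,1));
     (false, (47, 872), (0,0,1,5,0));
     (true, (70, 656), (0,0,2,0,4));
     (true, (78, 592), (0,0,2,1,3));
     (true, (20, 224), (0,0,2,2,2));
     (true, (78, 592), (0,0,2,3,1));
     (true, (70, 656), (0,0,2,4,0));
     (false, (54, 16), (0,0,3,0,3));
     (false, (79, 616), (0,0,3,1,2));
     (false, (79, 616), (0,0,3,2,1));
     (false, (54, 16), (0,0,3,3,0));
     (true, (25, 600), (0,0,4,0,2));
     (true, (40, 192), (0,0,4,1,1));
     (true, (25, 600), (0,0,4,2,0));
     (false, (6, 912), (0,0,5,0,1));
     (false, (6, 912), (0,0,5,1,0));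
     (true, (0, 768), (0,0,6,0,0));
     (false, (6, 912), (0,1,0,0,5));
     (false, (2, 304), (0,1,0,1,4));
     (false, (34, 560), (0,1,0,2,3));
     (false, (34, 560), (0,1,0,3,2));
     (false, (2, 304), (0,1,0,4,1));
     (false, (6, 912), (0,1,0,5,0));
     (true, (34, 560), (0,1,1,0,4));
     (false, (15, 360), (0,1,1,1,3));
     (false, (79, 104), (0,1,1,2,2));
     (false, (15, 360), (0,1,1,3,1));
     (true, (34, 560), (0,1,1,4,0));
     (false, (59, 136), (0,1,2,0,3));
     (false, (14, 592), (0,1,2,1,2));
     (false, (14, 592), (0,1,2,2,1));
     (false, (59, 136), (0,1,2,3,0));
     (true, (39, 168), (0,1,3,0,2));
     (true, (39, 936), (0,1,3,1,1));
     (true, (39, 168), (0,1,3,2,0));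
     (false, (14, 592), (0,1,4,0,1));
     (false, (14, 592), (0,1,4,1,0));
     (true, (2, 304), (0,1,5,0,0));
     (true, (9, 216), (0,2,0,0,4));
     (true, (74, 496), (0,2,0,1,3));
     (true, (151, 296), (0,2,0,2,2));
     (true, (74, 496), (0,2,0,3,1));
     (true, (9, 216), (0,2,0,4,0));
     (false, (22, 272), (0,2,1,0,3));
     (false, (51, 456), (0,2,1,1,2));
     (false, (51, 456), (0,2,1,2,1));
     (false, (22, 272), (0,2,1,3,0));
     (true, (42, 240), (0,2,2,0,2));
     (true, (51, 456), (0,2,2,1,1));
     (true, (42, 240), (0,2,2,2,0));
     (false, (22, 272), (0,2,3,0,1));
     (false, (22, 272), (0,2,3,1,0));
     (true, (4, 608), (0,2,4,0,0));
     (false, (25, 344), (0,3,0,0,3));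
     (false, (108, 288), (0,3,0,1,2));
     (false, (108, 288), (0,3,0,2,1));
     (false, (25, 344), (0,3,0,3,0));
     (true, (26, 880), (0,3,1,0,2));
     (true, (64, 512), (0,3,1,1,1));
     (true, (26, 880), (0,3,1,2,0));
     (false, (22, 272), (0,3,2,0,1));
     (false, (22, 272), (0,3,2,1,0));
     (true, (5, 376), (0,3,3,0,0));
     (true, (21, 504), (0,4,0,0,2));
     (true, (48, 384), (0,4,0,1,1));
     (true, (21, 504), (0,4,0,2,0));
     (false, (14, 592), (0,4,1,0,1));
     (false, (14, 592), (0,4,1,1,0));
     (true, (4, 608), (0,4,2,0,0));
     (false, (6, 912), (0,5,0,0,1));
     (false, (6, 912), (0,5,0,1,0));
     (true, (2, 304), (0,5,1,0,0));
     (true, (0, 768), (0,6,0,0,0))].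
Definition mono {R : comRingType} (y0 y1 y2 y3 y4 : R) (e : nat*nat*nat*nat*nat) : R :=
  let '(a,b,c,d,f) := e in y0^+a * y1^+b * y2^+c * y3^+d * y4^+f.
Definition evl {R : comRingType} (l : seq (bool * (nat*nat) * (nat*nat*nat*nat*nat))) (y0 y1 y2 y3 y4 : R) : R :=
  foldr (fun t acc => (if t.1.1 then - (t.1.2.1%:R * 1000%:R + t.1.2.2%:R) else (t.1.2.1%:R * 1000%:R + t.1.2.2%:R)) * mono y0 y1 y2 y3 y4 t.2 + acc) 0 l.
Definition Gf {R : comRingType} (y0 y1 y2 y3 y4 : R) (a b c d : bool) : R :=
  y0 + (-1)^+a * y1 + (-1)^+b*y2 + (-1)^+c*y3 + (-1)^+d*y4.
Lemma P16 (R : comRingType) (y0 y1 y2 y3 y4 : R) : \prod_(a:bool)\prod_(b:bool)\prod_(c:bool)\prod_(d:bool) Gf y0 y1 y2 y3 y4 a b c d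
  = evl Dlist (y0^+2) (y1^+2) (y2^+2) (y3^+2) (y4^+2).
Proof.
rewrite !big_bool /Gf /=.
cbv beta iota delta [evl foldr Dlist mono fst snd].
ring.
Qed.
Lemma Ident (R : comRingType) (y0 y1 y2 y3 y4 : R) :
  - 9%:R * evl Dlist y0 y1 y2 y3 y4 = 3%:R * (evl gList y0 y1 y2 y3 y4)^+2
   + evl aList y0 y1 y2 y3 y4 * (y0 + y1 + y2 - 3%:R * y3 - 3%:R * y4)
   + evl bList y0 y1 y2 y3 y4 * (y0^+2 + y1^+2 + y2^+2 + 9%:R * y3^+2 - y0*y1 - y0*y2 - 3%:R*(y0*y3) - y1*y2 - 3%:R*(y1*y3) - 3%:R*(y2*y3)).
Proof.
cbv beta iota delta [evl foldr Dlist gList aList bList mono fst snd].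
ring.
Qed.


Definition Hh (p : poly5) : poly5 := \sum_(m <- msupp p) p@_m *: 'X_[halfm m].

Lemma H_supp p (r : seq 'X_{1..5}) : uniq r -> {subset msupp p <= r} ->
  Hh p = \sum_(m <- r) p@_m *: 'X_[halfm m].
Proof.
move=> ur sub.
rewrite (bigID (fun m => m \in msupp p)) /= [X in _ + X]big1 ?addr0; last first.
  by move=> m /negbTE; rewrite mcoeff_msupp => /negbFE /eqP ->; rewrite scale0r.
rewrite -big_filter /Hh; apply: perm_big; apply: uniq_perm.
- exact: msupp_uniq.
- exact: filter_uniq.
by move=> m; rewrite mem_filter; case: (boolP (m \in msupp p)) => // /sub ->.
Qed.

Lemma HD p q : Hh (p + q) = Hh p + Hh q.
Proof.
set r := undup (msupp p ++ msupp q).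
have ur : uniq r by exact: undup_uniq.
have s1 : {subset msupp p <= r} by move=> m mp; rewrite mem_undup mem_cat mp.
have s2 : {subset msupp q <= r} by move=> m mq; rewrite mem_undup mem_cat mq orbT.
have s3 : {subset msupp (p + q) <= r} by move=> m /msuppD_le; rewrite mem_undup.
rewrite (H_supp _ _ ur s3) (H_supp _ _ ur s1) (H_supp _ _ ur s2).
by rewrite -big_split; apply: eq_bigr => m _; rewrite mcoeffD scalerDl.
Qed.

Lemma HZ c p : Hh (c *: p) = c *: Hh p.
Proof.
rewrite (H_supp (c *: p) (msupp p)) //; last exact: msuppZ_le.
by rewrite /Hh scaler_sumr; apply: eq_bigr => m _; rewrite mcoeffZ scalerA.
Qed.

Lemma H0 : Hh 0 = 0.
Proof. by rewrite (H_supp 0 [::]) ?big_nil // => m; rewrite msupp0. Qed.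

Lemma HX m : Hh 'X_[m] = 'X_[halfm m].
Proof. by rewrite /Hh msuppX big_seq1 mcoeffX eqxx scale1r. Qed.

Definition dbl (m : 'X_{1..5}) : 'X_{1..5} := [multinom (m i).*2 | i < 5].

Lemma halfm_dbl m : halfm (dbl m) = m.
Proof. by apply/mnmP => i; rewrite !mnmE doubleK. Qed.

Definition sq : 5.-tuple poly5 := [tuple 'X_i ^+ 2 | i < 5].
Definition Sq (p : poly5) : poly5 := p \mPo sq.

Lemma SqX m : 'X_[m] \mPo sq = 'X_[dbl m].
Proof.
rewrite comp_mpolyX [RHS]mpolyXE_id; apply: eq_bigr => i _.
by rewrite tnth_mktuple mnmE -exprM mul2n.
Qed.

Lemma HSq p : Hh (Sq p) = p.
Proof.
rewrite /Sq comp_mpolyEX (big_morph Hh HD H0) [RHS]mpolyE.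
by apply: eq_bigr => m _; rewrite SqX HZ HX halfm_dbl.
Qed.

Lemma Sq_xv i : (i < 5)%N -> xv i \mPo sq = xv i ^+ 2.
Proof. by move=> hi; rewrite /Sq /xv comp_mpolyXU -(tnth_nth 0) tnth_mktuple. Qed.


Lemma LF (s : {ffun 'I_4 -> bool}) :
  'X_ord0 + \sum_(k < 4) (-1) ^+ (s k) * 'X_(lift ord0 k) =
  Gf (xv 0) (xv 1) (xv 2) (xv 3) (xv 4) (s (inord 0)) (s (inord 1)) (s (inord 2)) (s (inord 3)) :> poly5.
Proof.
rewrite !big_ord_recl big_ord0 addr0 /Gf /xv !addrA.
have e : forall (k : nat) (i : 'I_5) (j : 'I_4), val i = k.+1 -> val j = k -> (k < 4)%N ->
   (-1) ^+ (s j) * 'X_i = (-1) ^+ (s (inord k)) * ('X_(inord k.+1) : poly5).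
  move=> k i j hi hj hk.
  have -> : i = inord k.+1 by apply/val_inj; rewrite /= inordK // hi.
  by have -> : j = inord k by apply/val_inj; rewrite /= inordK // hj.
congr (_ + _ + _ + _ + _); try by apply: e.
by have -> : (ord0 : 'I_5) = inord 0 by apply/val_inj; rewrite /= inordK.
Qed.

Lemma ffun4 (F : bool -> bool -> bool -> bool -> poly5) :
  \prod_(s : {ffun 'I_4 -> bool}) F (s (inord 0)) (s (inord 1)) (s (inord 2)) (s (inord 3))
  = \prod_(a : bool) \prod_(b : bool) \prod_(c : bool) \prod_(d : bool) F a b c d.
Proof.
rewrite pair_big pair_big pair_big /=.
pose h (r : bool * bool * bool * bool) : {ffun 'I_4 -> bool} :=
  [ffun i : 'I_4 => nth false [:: r.1.1.1; r.1.1.2; r.1.2; r.2] i].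
pose hi (s : {ffun 'I_4 -> bool}) := (s (inord 0), s (inord 1), s (inord 2), s (inord 3)).
rewrite (reindex h) /=.
  by apply: eq_bigr => [[[[a b] c] d]] _; rewrite !ffunE !inordK.
exists hi => [[[[a b] c] d]|s] _.
  by rewrite /hi !ffunE !inordK.
apply/ffunP => i; rewrite ffunE /=.
case: i => [[|[|[|[|k]]]] hk] //=; congr (s _); apply/val_inj; rewrite /= inordK //.
Qed.

Definition XX := (xv 0, xv 1, xv 2, xv 3, xv 4).
Lemma L1 : Pprod = \prod_(s : {ffun 'I_4 -> bool}) Gf (xv 0) (xv 1) (xv 2) (xv 3) (xv 4) (s (inord 0)) (s (inord 1)) (s (inord 2)) (s (inord 3)).
Proof. exact: (eq_bigr _ (fun s _ => LF s)). Qed.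
Lemma L2 : \prod_(s : {ffun 'I_4 -> bool}) Gf (xv 0) (xv 1) (xv 2) (xv 3) (xv 4) (s (inord 0)) (s (inord 1)) (s (inord 2)) (s (inord 3))
  = \prod_(a : bool) \prod_(b : bool) \prod_(c : bool) \prod_(d : bool) Gf (xv 0) (xv 1) (xv 2) (xv 3) (xv 4) a b c d.
Proof. exact: ffun4. Qed.
Lemma L3 : \prod_(a : bool) \prod_(b : bool) \prod_(c : bool) \prod_(d : bool) Gf (xv 0) (xv 1) (xv 2) (xv 3) (xv 4) a b c d
  = evl Dlist (xv 0 ^+ 2) (xv 1 ^+ 2) (xv 2 ^+ 2) (xv 3 ^+ 2) (xv 4 ^+ 2).
Proof. exact: P16. Qed.


Lemma evl_morph' (R R' : comRingType) (f : R -> R')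
  (fD : forall x y, f (x + y) = f x + f y) (fM : forall x y, f (x * y) = f x * f y)
  (fN : forall x, f (- x) = - f x) (f1 : f 1 = 1) (f0 : f 0 = 0) l y0 y1 y2 y3 y4 :
  f (evl l y0 y1 y2 y3 y4) = evl l (f y0) (f y1) (f y2) (f y3) (f y4).
Proof.
have fn : forall n : nat, f n%:R = n%:R.
  by elim=> [|n IH]; rewrite ?f0 // -addn1 !natrD fD IH f1.
have fX : forall x (k : nat), f (x ^+ k) = f x ^+ k.
  by move=> x; elim=> [|k IH]; rewrite ?expr0 ?f1 // !exprS fM IH.
elim: l => [|[[b [c1 c2]] [[[[e0 e1] e2] e3] e4]] l IH] /=; first by rewrite f0.
rewrite fD IH fM; congr (_ * _ + _).
  by case: b; rewrite ?fN fD fM !fn.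
by rewrite /mono !fM !fX.
Qed.

Lemma SqD x y : Sq (x + y) = Sq x + Sq y. Proof. exact: comp_mpolyD. Qed.
Lemma SqM x y : Sq (x * y) = Sq x * Sq y. Proof. exact: rmorphM. Qed.
Lemma SqN x : Sq (- x) = - Sq x. Proof. exact: comp_mpolyN. Qed.
Lemma Sq1 : Sq 1 = 1. Proof. exact: comp_mpoly1. Qed.
Lemma Sq0 : Sq 0 = 0. Proof. exact: comp_mpoly0. Qed.

Lemma L4 : evl Dlist (xv 0 ^+ 2) (xv 1 ^+ 2) (xv 2 ^+ 2) (xv 3 ^+ 2) (xv 4 ^+ 2) = Sq (evl Dlist (xv 0) (xv 1) (xv 2) (xv 3) (xv 4)).
Proof.
rewrite (@evl_morph' _ _ Sq SqD SqM SqN Sq1 Sq0).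
by rewrite /Sq !Sq_xv.
Qed.


Lemma Delta'_eq : Delta' = evl Dlist (xv 0) (xv 1) (xv 2) (xv 3) (xv 4).
Proof.
have -> : Delta' = Hh Pprod by [].
by rewrite L1 L2 L3 L4 HSq.
Qed.

Lemma xv_homog i : xv i \is 1.-homog.
Proof. by rewrite /xv dhomogX; apply/eqP; exact: mdeg1. Qed.

Lemma mono_homog e0 e1 e2 e3 e4 :
  mono (xv 0) (xv 1) (xv 2) (xv 3) (xv 4) (e0, e1, e2, e3, e4) \is (e0 + e1 + e2 + e3 + e4)%N.-homog.
Proof.
rewrite /mono.
have h : forall i k, xv i ^+ k \is k.-homog.
  by move=> i k; have := dhomogMn k (xv_homog i); rewrite mul1n.
by do 4 apply: dhomogM => //.
Qed.

Lemma evl_homog d l :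
  all (fun t : bool * (nat * nat) * (nat * nat * nat * nat * nat) =>
        let '(e0, e1, e2, e3, e4) := t.2 in (e0 + e1 + e2 + e3 + e4)%N == d) l ->
  evl l (xv 0) (xv 1) (xv 2) (xv 3) (xv 4) \is d.-homog.
Proof.
elim: l => [|[[b [c1 c2]] [[[[e0 e1] e2] e3] e4]] l IH] /=; first by move=> _; exact: rpred0.
case/andP => /eqP hd /IH hl; apply: rpredD => //.
have hm := mono_homog e0 e1 e2 e3 e4; rewrite hd in hm.
have -> : (c1%:R * 1000%:R + c2%:R : poly5) = (c1 * 1000 + c2)%:R by rewrite natrD natrM.
by case: b; rewrite ?mulNr ?rpredN mulr_natl rpredMn.
Qed.

Definition gP := evl gList (xv 0) (xv 1) (xv 2) (xv 3) (xv 4).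
Definition aP : poly5 := (3^-1 : rat) *: evl aList (xv 0) (xv 1) (xv 2) (xv 3) (xv 4).
Definition bP : poly5 := (3^-1 : rat) *: evl bList (xv 0) (xv 1) (xv 2) (xv 3) (xv 4).

Lemma gP_homog : gP \is 4.-homog.
Proof. by apply: evl_homog. Qed.

Lemma lQ_eq : lQ = xv 0 + xv 1 + xv 2 - 3%:R * xv 3 - 3%:R * xv 4.
Proof. by rewrite /lQ !scaler_nat !mulr_natl. Qed.

Lemma qQ_eq : qQ = xv 0 ^+ 2 + xv 1 ^+ 2 + xv 2 ^+ 2 + 9%:R * xv 3 ^+ 2 - xv 0 * xv 1 - xv 0 * xv 2
   - 3%:R * (xv 0 * xv 3) - xv 1 * xv 2 - 3%:R * (xv 1 * xv 3) - 3%:R * (xv 2 * xv 3).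
Proof. by rewrite /qQ !scaler_nat !mulr_natl. Qed.

Lemma final_alg (R : comRingType) (k D G A B l q : R) :
  k * 3%:R = 1 ->
  - 9%:R * D = 3%:R * G ^+ 2 + A * l + B * q ->
  - 3%:R * D = G ^+ 2 + k * A * l + k * B * q.
Proof.
move=> hk I.
transitivity (G ^+ 2 + k * (A * l + B * q)); last by ring.
have -> : A * l + B * q = - 9%:R * D - 3%:R * G ^+ 2 by rewrite I; ring.
transitivity (G ^+ 2 + (k * 3%:R) * (- (3%:R * D) - G ^+ 2)); last by ring.
rewrite hk; ring.
Qed.



Lemma split_gen (D G A B : poly5) :
  - 9%:R * D = 3%:R * G ^+ 2 + A * (xv 0 + xv 1 + xv 2 - 3%:R * xv 3 - 3%:R * xv 4)
   + B * (xv 0 ^+2 + xv 1 ^+2 + xv 2 ^+2 + 9%:R * xv 3 ^+2 - xv 0 * xv 1 - xv 0 * xv 2 - 3%:R*(xv 0 * xv 3)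
          - xv 1 * xv 2 - 3%:R*(xv 1 * xv 3) - 3%:R*(xv 2 * xv 3)) ->
  (-3 : rat) *: D = G ^+ 2 + ((3^-1 : rat) *: A) * lQ + ((3^-1 : rat) *: B) * qQ.
Proof.
move=> I.
rewrite lQ_eq qQ_eq -!mul_mpolyC.
have hk : (3^-1 : rat)%:MP * 3%:R = 1 :> poly5.
  by rewrite -mpolyC_nat -mpolyCM mulVf // mpolyC1.
have h3 : (-3 : rat)%:MP = - 3%:R :> poly5 by rewrite mpolyCN mpolyC_nat.
rewrite h3.
exact: (@final_alg _ _ _ _ _ _ _ _ hk I).
Qed.

Lemma split_eq : Fbranch = gP ^+ 2 + aP * lQ + bP * qQ.
Proof.
rewrite /Fbranch Delta'_eq /aP /bP /gP.
exact: (split_gen _ _ _ _ (Ident _ (xv 0) (xv 1) (xv 2) (xv 3) (xv 4))).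
Qed.


Lemma points_gen (F G A B L Q : poly5) (x : 'I_5 -> rat) :
  F = G ^+ 2 + A * L + B * Q -> L.@[x] = 0 -> Q.@[x] = 0 -> (G.@[x]) ^+ 2 = F.@[x].
Proof. by move=> -> hl hq; rewrite !mevalD !mevalM hl hq !mulr0 !addr0 ?rmorphXn ?expr2. Qed.

Lemma pointsQ (x : 'I_5 -> rat) : lQ.@[x] = 0 -> qQ.@[x] = 0 -> (gP.@[x]) ^+ 2 = Fbranch.@[x].
Proof.
move=> hl hq; exact: (@points_gen _ _ _ _ _ _ _ split_eq hl hq).
Qed.

Definition xn (n : nat) : 'I_5 -> rat := fun i =>
  nth 0 [:: (n%:R : rat) ^+ 2 + 3%:R * n%:R + 3%:R; (n%:R : rat) ^+ 2 + 3%:R;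
             (n%:R : rat) ^+ 2 - 3%:R * n%:R + 3%:R; 3%:R; (n%:R : rat) ^+ 2] i.

Lemma xnE n k : (k < 5)%N -> xn n (inord k) = nth 0 [:: (n%:R : rat) ^+ 2 + 3%:R * n%:R + 3%:R; (n%:R : rat) ^+ 2 + 3%:R;
             (n%:R : rat) ^+ 2 - 3%:R * n%:R + 3%:R; 3%:R; (n%:R : rat) ^+ 2] k.
Proof. by move=> hk; rewrite /xn inordK. Qed.

Lemma xn_lQ n : lQ.@[xn n] = 0.
Proof.
rewrite lQ_eq /xv !mevalB !mevalD !mevalM !mevalXU !rmorph_nat !xnE //=.
ring.
Qed.

Lemma xn_qQ n : qQ.@[xn n] = 0.
Proof.
rewrite qQ_eq /xv !mevalB !mevalD !mevalM ?rmorphXn !mevalXU !rmorph_nat !xnE //=.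
ring.
Qed.


Theorem mainTheorem11 :
  (* infinitely many Q-rational points on O (pairwise distinct as points) *)
  (exists f : nat -> rat * ('I_5 -> rat),
      (forall n, on_O (f n)) /\ (forall n m, wequiv (f n) (f m) -> n = m))
  /\
  (* the double covering splits over Q = {l = q = 0}: (-3)Delta' restricted
     to Q is the square of a quartic form *)
  (exists g a b : poly5,
      g \is 4.-homog /\ Fbranch = g ^+ 2 + a * lQ + b * qQ)
  /\
  (* in particular, above every Q-rational point of Q lie one or two
     Q-rational points of O *)
  (forall x : 'I_5 -> rat, (exists i, x i != 0) ->
      lQ.@[x] = 0 -> qQ.@[x] = 0 -> exists w : rat, w ^+ 2 = Fbranch.@[x]).
Proof.
split; last split.
- exists (fun n => (gP.@[xn n], xn n)); split.
    move=> n; split; last exact: (pointsQ _ (xn_lQ n) (xn_qQ n)).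
    by exists (inord 3); rewrite /= xnE.
  move=> n m [c hc [_ hx]].
  have h3 := hx (inord 3); have h4 := hx (inord 4).
  rewrite /= !xnE //= in h3 h4.
  have c1 : c = 1.
    apply/eqP; rewrite -(subr_eq0 c 1).
    have : (3%:R : rat) * (c - 1) = 0 by rewrite mulrBr mulr1 [3%:R * c]mulrC -h3 subrr.
    by move/eqP; rewrite mulf_eq0 pnatr_eq0.
  rewrite c1 mul1r -!natrX in h4.
  move/eqP: h4; rewrite eqr_nat eqn_exp2r // => /eqP.
  by [].
- by exists gP, aP, bP; split; [exact: gP_homog | exact: split_eq].
- by move=> x _ hl hq; exists gP.@[x]; exact: pointsQ.
Qed.
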